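(* Let $n\ge 2$ be an integer, let $\Omega_n\subset\mathbb{R}^{n^3}$ be the polytope of $n\times n\times n$ stochastic tensors, and let $f_0(\Omega_n)$ be its number of vertices. Then $$f_0(\Omega_n)\ge l_0^{(n-1)^3}(n^3),$$ where $l_0^{(n-1)^3}(n^3)=k$ is the integer $k$ such that $u_0^{(n-1)^3}(k-1)<n^3\le u_0^{(n-1)^3}(k)$.
   Context: An $n\times n\times n$ stochastic tensor is a real array $A=(a_{ijk})_{1\le i,j,k\le n}$ with all $a_{ijk}\ge 0$ and all line sums equal to $1$: $\sum_i a_{ijk}=1$ for all $j,k$; $\sum_j a_{ijk}=1$ for all $i,k$; $\sum_k a_{ijk}=1$ for all $i,j$. The set $\Omega_n$ of such tensors is a convex polytope in $\mathbb{R}^{n^3}$. For a positive integer $d$ and integer $m$, define $$u_0^d(m)=\binom{m-\lfloor \frac{d}{2}\rfloor -1}{\lfloor \frac{d-1}{2}\rfloor}+\binom{m-\lfloor \frac{d-1}{2}\rfloor -1}{\lfloor \frac{d}{2}\rfloor},$$ and for a number $x$, $l_0^d(x)=k$ if and only if $u_0^d(k-1)<x\le u_0^d(k)$. *)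

(* Defs.v *)
From mathcomp Require Import all_boot all_order all_algebra.
From mathcomp Require Import reals.
Set Implicit Arguments. Unset Strict Implicit. Unset Printing Implicit Defensive.
Import Order.TTheory GRing.Theory Num.Theory.
Local Open Scope ring_scope.

Definition tensor (R : realType) (n : nat) := {ffun 'I_n * 'I_n * 'I_n -> R}.

Definition stochastic (R : realType) (n : nat) (A : tensor R n) : Prop :=
  (forall i j k, 0 <= A (i, j, k)) /\
  (forall j k, \sum_(i < n) A (i, j, k) = 1) /\
  (forall i k, \sum_(j < n) A (i, j, k) = 1) /\
  (forall i j, \sum_(k < n) A (i, j, k) = 1).

(* Vertices of the polytope Omega_n = extreme points: points of Omega_n that
   are not a proper convex combination of two distinct points of Omega_n. *)
Definition is_vertex (R : realType) (n : nat) (A : tensor R n) : Prop :=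
  stochastic A /\
  forall (B C : tensor R n) (t : R), stochastic B -> stochastic C ->
    0 < t < 1 -> (forall x, A x = t * B x + (1 - t) * C x) -> B = C.

Definition binz (a : int) (b : nat) : nat :=
  match a with Posz a' => 'C(a', b) | Negz _ => 0%N end.

Definition u0 (d : nat) (m : int) : nat :=
  (binz (m - (d./2)%:Z - 1) ((d.-1)./2) + binz (m - ((d.-1)./2)%:Z - 1) (d./2))%N.

Definition is_l0 (d : nat) (x : nat) (k : int) : Prop :=
  (u0 d (k - 1) < x)%N /\ (x <= u0 d k)%N.

(* Main.v *)
Require Import Defs.
From mathcomp Require Import all_boot all_order all_algebra all_fingroup.
From mathcomp Require Import reals.
From mathcomp Require Import zify lra.
Import Order.TTheory GRing.Theory Num.Theory.

Section Helpers.
Local Open Scope ring_scope.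

Lemma sum_inj (R : realType) N (f : 'I_N -> 'I_N) (k : 'I_N) :
  injective f -> \sum_i ((f i == k)%:R : R) = 1.
Proof.
move=> fi; pose p := perm fi.
rewrite (eq_bigr (fun i => ((p i == k)%:R : R))); last by move=> i _; rewrite permE.
rewrite (reindex_inj (@perm_inj _ p^-1%g)) /=.
rewrite (eq_bigr (fun i => ((i == k)%:R : R))); last by move=> i _; rewrite permKV.
by rewrite (bigD1 k) //= eqxx big1 ?addr0 // => i /negbTE ->.
Qed.

Lemma latin_stoch (R : realType) m (L : 'I_m.+1 -> 'I_m.+1 -> 'I_m.+1) :
  (forall j, injective (L ^~ j)) -> (forall i, injective (L i)) ->
  stochastic ([ffun x => ((L x.1.1 x.1.2 == x.2)%:R : R)] : tensor R m.+1).
Proof.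
move=> h1 h2; split; [|split; [|split]].
- by move=> i j k; rewrite ffunE ler0n.
- by move=> j k; under eq_bigr do rewrite ffunE /=; exact: sum_inj.
- by move=> i k; under eq_bigr do rewrite ffunE /=; exact: sum_inj.
- move=> i j; under eq_bigr do rewrite ffunE /= eq_sym.
  by apply: sum_inj => a b.
Qed.

Lemma stoch_le1 {R : realType} {n} {B : tensor R n} x : stochastic B -> B x <= 1.
Proof.
case: x => [[i j] k] [h0 [_ [_ h3]]].
have := h3 i j; rewrite (bigD1 k) //= => E.
have : 0 <= \sum_(k' < n | k' != k) B (i, j, k') by apply: sumr_ge0.
lra.
Qed.

Lemma vertex01 (R : realType) n (A : tensor R n) :
  stochastic A -> (forall x, A x = 0 \/ A x = 1) -> is_vertex A.
Proof.
move=> sA h01; split => // B C t sB sC /andP[t0 t1] E.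
apply/ffunP => x.
have b1 := stoch_le1 x sB; have c1 := stoch_le1 x sC.
have b0 : 0 <= B x by case: x {b1 c1} => [[i j] k]; case: sB.
have c0 : 0 <= C x by case: x {b1 c1 b0} => [[i j] k]; case: sC.
have := E x; case: (h01 x) => -> e.
- have : t * B x = 0 by nra.
  have : (1 - t) * C x = 0 by nra.
  move/eqP; rewrite mulf_eq0 => /orP[|/eqP ->]; first by move=> /eqP; lra.
  move/eqP; rewrite mulf_eq0 => /orP[|/eqP ->] //; by move=> /eqP; lra.
- have : t * (1 - B x) = 0 by nra.
  move/eqP; rewrite mulf_eq0 => /orP[|]; first by move=> /eqP; lra.
  move/eqP => eb.
  have : (1 - t) * (1 - C x) = 0 by nra.
  move/eqP; rewrite mulf_eq0 => /orP[|]; first by move=> /eqP; lra.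
  move/eqP => ec; lra.
Qed.

Definition lat m (p : {perm 'I_m.+1}) (q : {perm 'I_m}) (i j : 'I_m.+1) : 'I_m.+1 :=
  p i + lift_perm ord0 ord0 q j.
Arguments lat {m}.

Definition tens (R : realType) m (pq : {perm 'I_m.+1} * {perm 'I_m}) : tensor R m.+1 :=
  [ffun x => ((lat pq.1 pq.2 x.1.1 x.1.2 == x.2)%:R : R)].
Arguments tens R {m}.

Lemma tens_vertex (R : realType) m (pq : {perm 'I_m.+1} * {perm 'I_m}) : is_vertex (tens R pq).
Proof.
apply: vertex01.
  apply: latin_stoch => [j a b|i a b]; rewrite /lat.
  by move/addIr/perm_inj.
  by move/addrI/perm_inj.
by move=> x; rewrite ffunE; case: eqP => _; [right|left].
Qed.

Lemma tens_inj (R : realType) m : injective (@tens R m).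
Proof.
move=> [p q] [p' q'] E.
have L : forall i j, lat p q i j = lat p' q' i j.
  move=> i j; have := congr1 (fun F : tensor R m.+1 => F (i, j, lat p q i j)) E.
  rewrite !ffunE /= eqxx; case: eqP => // _ /eqP.
  by rewrite pnatr_eq0.
have pp : p = p'.
  by apply/permP => i; have := L i ord0; rewrite /lat !lift_perm_id !addr0.
subst p'; congr pair; apply/permP => j.
have := L ord0 (lift ord0 j); rewrite /lat => /addrI.
by rewrite !lift_perm_lift => /lift_inj.
Qed.

End Helpers.

Lemma bin_ge a b : (1 <= b)%N -> (b < a)%N -> (a <= 'C(a, b))%N.
Proof.
move=> b1; elim: a => // a IH; rewrite ltnS leq_eqVlt => /orP[/eqP <-|ba].
  by rewrite binSn.
case: b b1 IH ba => // b _ IH ba; rewrite binS.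
have := IH ba; have : (0 < 'C(a, b))%N by rewrite bin_gt0; lia.
lia.
Qed.

Lemma binzP (j a : nat) b : (a < j)%N -> binz (j%:Z - a%:Z - 1)%R b = 'C(j - a.+1, b).
Proof.
move=> h; have -> : (j%:Z - a%:Z - 1 = (j - a.+1)%N%:Z)%R by lia.
by [].
Qed.

Lemma half_facts d : (d./2 * 2 <= d /\ d <= d./2 * 2 + 1)%N.
Proof. have := odd_double_half d; rewrite -muln2; case: (odd d) => /=; lia. Qed.

Lemma fact_bound p : ((p.+4) ^ 3 + 2 * (p.+3) ^ 3 + 2 <= (p.+4)`! * (p.+3)`!)%N.
Proof.
have h3 : (6 <= (p.+3)`!)%N.
  rewrite !factS; have := fact_gt0 p; nia.
have h4 : ((p+4)*(p+3)*(p+2)*(p+1) <= (p.+4)`!)%N.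
  rewrite !factS; have := fact_gt0 p; nia.
have := leq_mul h4 h3; nia.
Qed.

Lemma num_bound m k : (1 <= m)%N -> is_l0 (m ^ 3) (m.+1 ^ 3) k ->
  (k <= (m.+1`! * m`!)%N%:Z)%R.
Proof.
move=> m1 [H1 H2].
case: m m1 H1 H2 => [//|[|m]] _ H1 H2.
  exfalso; move: H2; rewrite /u0 /=.
  have hb : forall a, (binz a 0 <= 1)%N by case=> a; rewrite /binz ?bin0.
  have := hb (k - 0%Z - 1)%R; lia.
case: k H1 H2 => [k|k] H1 H2; last by [].
rewrite lez_nat; case: (leqP k (m.+3`! * m.+2`!)) => // hM.
case: k hM H1 H2 => // j hM H1 _.
have e : (Posz j.+1 - 1 = Posz j)%R by lia.
move: H1; rewrite e /u0.
set d := (m.+2 ^ 3)%N.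
have [a1 a2] := half_facts d; have [b1 b2] := half_facts d.-1.
have d1 : (1 <= d)%N by rewrite /d expn_gt0.
have hj : (d.-1./2 < j)%N.
  have : (d < m.+3`! * m.+2`!)%N.
    rewrite /d; case: (m) {e hM a1 a2 b1 b2 d1} => [|p]; first by [].
    have := fact_bound p; lia.
  have := leq_pred d; lia.
rewrite (binzP _ _ _ hj).
rewrite /d in a1 a2 b1 b2 hj *; clear d e d1.
case: m hM a1 a2 b1 b2 hj => [|p] hM a1 a2 b1 b2 hj.
  rewrite /= in hj hM *.
  have : (70 <= 'C(j - 4, 4))%N.
    have c8 : 'C(8, 4) = 70 by [].
    have f : (3`! * 2`! = 12)%N by [].
    rewrite f in hM; have := @leq_bin2l 8 (j - 4) 4; rewrite c8; apply; lia.
  lia.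
have fb := fact_bound p.
have hb : (j - ((p.+3 ^ 3).-1./2).+1 <= 'C(j - ((p.+3 ^ 3).-1./2).+1, (p.+3 ^ 3)./2))%N.
  have : (8 <= p.+3 ^ 3)%N by rewrite -[8]/(2 ^ 3)%N leq_exp2r.
  have := leq_pred (p.+3 ^ 3).
  move=> ? ?; apply: bin_ge; lia.
have := leq_pred (p.+3 ^ 3); lia.
Qed.

Theorem theorem5 (R : realType) (n : nat) (hn : (2 <= n)%N) (k : int) :
  is_l0 ((n - 1) ^ 3) (n ^ 3) k ->
  exists s : seq (tensor R n),
    [/\ uniq s, (forall A, A \in s -> is_vertex A) & (k <= (size s)%:Z)%R].
Proof.
case: n hn => // m hm; rewrite subn1 /= => hl.
exists (map (@tens R m) (enum {: {perm 'I_m.+1} * {perm 'I_m}})); split.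
- by rewrite map_inj_uniq ?enum_uniq //; exact: tens_inj.
- by move=> A /mapP [pq _ ->]; exact: tens_vertex.
- rewrite size_map -cardE card_prod !card_Sn.
  by apply: num_bound.
Qed.
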